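(* Let $k$ be an algebraically closed field of characteristic zero, $\mathfrak g$ a nonzero finite-dimensional nilpotent Lie algebra over $k$, and $(A,\cdot)$ an LR-structure on $\mathfrak g$ such that the commuting family $\{L(x):x\in A\}$ has a single weight $\alpha$ on $A$ and $\alpha\ne 0$. Then $A$ contains an element $a\neq 0$ with $a\cdot a=a$.
   Context: An LR-algebra is a vector space $A$ with a bilinear product $\cdot$ satisfying $x\cdot(y\cdot z)=y\cdot(x\cdot z)$ and $(x\cdot y)\cdot z=(x\cdot z)\cdot y$ for all $x,y,z\in A$. An LR-structure on a Lie algebra $\mathfrak g$ is an LR-algebra product on the underlying vector space of $\mathfrak g$ with $x\cdot y-y\cdot x=[x,y]$. $L(x)y=x\cdot y$. ''Single weight $\alpha$'' means that for every $x$, $L(x)$ has only the eigenvalue $\alpha(L(x))$, where $\alpha$ is a linear form on the span of the $L(x)$. *)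

(* Defs.v *)
From HB Require Import structures.
From mathcomp Require Import all_boot all_order all_algebra.
Set Implicit Arguments. Unset Strict Implicit. Unset Printing Implicit Defensive.
Import GRing.Theory.
Local Open Scope ring_scope.

Section Defs.
Variables (k : fieldType) (n : nat).
Notation V := 'rV[k]_n.

Definition bilinear_op (op : V -> V -> V) : Prop :=
  (forall x, linear (op x)) /\ (forall y, linear (fun x => op x y)).

Definition lie_bracket (br : V -> V -> V) : Prop :=
  [/\ bilinear_op br, (forall x, br x x = 0) &
      (forall x y z, br x (br y z) + br y (br z x) + br z (br x y) = 0)].

(* nilpotent: some term of the lower central series vanishes, i.e. all
   iterated brackets [x1,[x2,...,[xm,y]...]] of a fixed length vanish *)
Definition nilpotent_lie (br : V -> V -> V) : Prop :=
  exists m : nat, forall (xs : seq V) (y : V), size xs = m -> foldr br y xs = 0.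

Definition LR_algebra (mul : V -> V -> V) : Prop :=
  (forall x y z, mul x (mul y z) = mul y (mul x z)) /\
  (forall x y z, mul (mul x y) z = mul (mul x z) y).

Definition LR_structure (br mul : V -> V -> V) : Prop :=
  [/\ bilinear_op mul, LR_algebra mul & forall x y, mul x y - mul y x = br x y].

(* left multiplication operator L(x), as a matrix acting on row vectors:
   v *m Lop mul x = mul x v *)
Definition Lop (mul : V -> V -> V) (x : V) : 'M[k]_n := lin1_mx (mul x).

Definition linear_form (alpha : 'M[k]_n -> k) : Prop :=
  forall (c : k) (A B : 'M[k]_n), alpha (c *: A + B) = c * alpha A + alpha B.

Definition single_weight (mul : V -> V -> V) (alpha : 'M[k]_n -> k) : Prop :=
  forall x a, eigenvalue (Lop mul x) a -> a = alpha (Lop mul x).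

End Defs.

(* Main.v *)
Require Import Defs.
From HB Require Import structures.
From mathcomp Require Import all_boot all_order all_algebra.
Import GRing.Theory.
Local Open Scope ring_scope.

Lemma lin1E (k : fieldType) (n : nat) (f : 'rV[k]_n -> 'rV[k]_n) (hf : linear f) u :
  u *m lin1_mx f = f u.
Proof.
pose g : {linear 'rV[k]_n -> 'rV[k]_n} :=
  HB.pack f (GRing.isLinear.Build k _ _ *:%R f hf).
exact: (mul_rV_lin1 g).
Qed.

Lemma lin0 (k : fieldType) (n : nat) (f : 'rV[k]_n -> 'rV[k]_n) (hf : linear f) :
  f 0 = 0.
Proof.
pose g : {linear 'rV[k]_n -> 'rV[k]_n} :=
  HB.pack f (GRing.isLinear.Build k _ _ *:%R f hf).
exact: (linear0 g).
Qed.

Theorem lemma2p4 (k : closedFieldType) (hchar : [pchar k] =i pred0) (n : nat)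
  (hn : (0 < n)%N) (br mul : 'rV[k]_n -> 'rV[k]_n -> 'rV[k]_n)
  (hlie : lie_bracket br) (hnil : nilpotent_lie br)
  (hLR : LR_structure br mul)
  (alpha : 'M[k]_n -> k) (halin : linear_form alpha)
  (hw : single_weight mul alpha)
  (hne : exists x, alpha (Lop mul x) != 0) :
  exists a : 'rV[k]_n, a != 0 /\ mul a a = a.
Proof.
case: hLR => [[hl1 hl2] [_ hR] _].
case: hne => x0 hx0.
have LE v : v *m Lop mul x0 = mul x0 v by rewrite /Lop lin1E.
have hU : Lop mul x0 \in unitmx.
  rewrite -row_free_unit -kermx_eq0.
  apply/negPn/negP => hev.
  have := hw x0 0; rewrite /eigenvalue /eigenspace raddf0 subr0 => /(_ hev) h0.
  by rewrite -h0 eqxx in hx0.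
set b := x0 *m invmx (Lop mul x0).
have hb : mul x0 b = x0 by rewrite -LE /b mulmxKV.
have hRb y : mul y b = y.
  have -> : y = mul x0 (y *m invmx (Lop mul x0)) by rewrite -LE mulmxKV.
  by rewrite hR hb.
exists b; split; last exact: hRb.
apply/eqP => b0.
have x00 : x0 = 0 by rewrite -hb b0 (@lin0 _ _ _ (hl1 x0)).
have halpha0 : alpha 0 = 0.
  have := halin 1 0 0; rewrite scale1r addr0 => /eqP.
  rewrite mul1r => /eqP h; apply: (@addrI _ (alpha 0)); by rewrite addr0 -h.
have : Lop mul x0 = 0.
  apply/matrixP => i j; rewrite /Lop /lin1_mx x00 !mxE.
  by rewrite (@lin0 _ _ _ (hl2 _)) mxE.
by move=> L0; rewrite L0 halpha0 eqxx in hx0.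
Qed.
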